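(* Let $U\in\mathcal U_n$ and let $U'\in\mathcal U_{n+1}$ be obtained from $U$ by adding an $(n+1)$-st unit interval $I_{n+1}$ to the right of the intervals of $U$. Let $s$ be the number of elements $i\in\{1,\dots,n\}$ that are incomparable to $n+1$ in $U'$. Then $a(U')$ is obtained from $a(U)$ by adding a final peak in position $(n-s,n+1)$.
   Context: A unit interval order on $\{1,\dots,n\}$ is given by closed intervals $I_1,\dots,I_n$ of length $1$, numbered from left to right, with $i\prec j$ iff $I_i$ lies strictly to the left of $I_j$; $\mathcal U_n$ is the set of these; adding $I_{n+1}$ to the right means $I_1,\dots,I_{n+1}$ remain numbered from left to right. A Dyck path of length $n$ is a lattice path from $(0,0)$ to $(n,n)$ with unit up and right steps never going below $y=x$. For $1\le i<j\le n$, box $(i,j)$ is the square $[i-1,i]\times[j-1,j]$; the area set of a Dyck path is the set of boxes between it and the diagonal. $a(U)$ is the Dyck path whose area set is $\{(i,j):1\le i<j\le n,\ i\not\prec j\}$. Adding a final peak in position $(i,n+1)$ to a Dyck path $D$ of length $n$ means: $D$ passes through $(i,n)$, and the new path of length $n+1$ follows $D$ up to $(i,n)$, then takes an up step to $(i,n+1)$, then right steps to $(n+1,n+1)$. *)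

(* Defs.v *)
From mathcomp Require Import all_boot all_order all_algebra.
From mathcomp Require Import reals.
Set Implicit Arguments. Unset Strict Implicit. Unset Printing Implicit Defensive.
Import Order.TTheory GRing.Theory Num.Theory.

(* ---------- Unit interval orders ----------
   A unit interval order on {1..n} is given by closed unit intervals
   I_i = [a i, a i + 1], i = 1..n, numbered from left to right
   (i.e. the left endpoints a 1 <= a 2 <= ... <= a n).  Indices are the
   natural numbers 1..n; values of a outside this range are irrelevant. *)

Definition left_to_right (R : realType) (a : nat -> R) (n : nat) : Prop :=
  forall i, 1 <= i -> i < n -> (a i <= a i.+1)%R.

Definition prec (R : realType) (a : nat -> R) (i j : nat) : bool :=
  (a i + 1 < a j)%R.

Definition incomparable (R : realType) (a : nat -> R) (i j : nat) : bool :=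
  ~~ prec a i j && ~~ prec a j i.

(* ---------- Dyck paths ----------
   A lattice path is a sequence of steps: true = up step (0,1),
   false = right step (1,0), starting at (0,0). *)

Definition xpos (D : seq bool) (k : nat) : nat := count (fun b => ~~ b) (take k D).
Definition ypos (D : seq bool) (k : nat) : nat := count id (take k D).

Definition dyck (n : nat) (D : seq bool) : Prop :=
  [/\ size D = (n + n)%N, count id D = n &
      forall k, xpos D k <= ypos D k].

(* height of the i-th right step (the one going from x = i-1 to x = i) *)
Definition rheight (D : seq bool) (i : nat) : nat :=
  ypos D (nth (size D) [seq k <- iota 0 (size D) | ~~ nth true D k] i.-1).

(* Box (i,j) = [i-1,i] x [j-1,j], 1 <= i < j <= n, lies in the area set
   (between the path and the diagonal) iff it lies below the right step
   of the path in column i. *)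
Definition area (n : nat) (D : seq bool) (i j : nat) : bool :=
  [&& 1 <= i, i < j, j <= n & j <= rheight D i].

Definition passes (D : seq bool) (x y : nat) : Prop :=
  exists k, k <= size D /\ xpos D k = x /\ ypos D k = y.

(* Adding a final peak in position (i, n+1) to a Dyck path D of length n:
   follow D up to (i, n) (reached after i + n steps), one up step, then
   right steps to (n+1, n+1). *)
Definition add_final_peak (n : nat) (D : seq bool) (i : nat) : seq bool :=
  take (i + n) D ++ true :: nseq (n.+1 - i) false.

(* D is the Dyck path a(U) for the unit interval order U on {1..n} given
   by the intervals with left endpoints a: its area set is
   {(i,j) : 1 <= i < j <= n, not i < j in U}. *)
Definition is_aU (R : realType) (a : nat -> R) (n : nat) (D : seq bool) : Prop :=
  dyck n D /\
  forall i j, area n D i j = [&& 1 <= i, i < j, j <= n & ~~ prec a i j].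

Definition s_incomp (R : realType) (a : nat -> R) (n : nat) : nat :=
  count (fun i => incomparable a i n.+1) (iota 1 n).

(* Main.v *)
Require Import Defs.
From mathcomp Require Import all_boot all_order all_algebra.
From mathcomp Require Import reals.
From mathcomp Require Import zify.
Set Implicit Arguments. Unset Strict Implicit. Unset Printing Implicit Defensive.

Fixpoint rr (D : seq bool) (k : nat) : nat :=
  match D with
  | [::] => 0
  | true :: D' => (rr D' k).+1
  | false :: D' => if k is k'.+1 then rr D' k' else 0
  end.

Definition cntF (D : seq bool) := count (fun b => ~~ b) D.

Lemma nth_mapS (s : seq nat) x0 k : nth x0.+1 (map S s) k = (nth x0 s k).+1.
Proof. by elim: s k => [|x s IH] [|k] //=. Qed.

Lemma posF_cons b D :
  [seq k <- iota 0 (size (b :: D)) | ~~ nth true (b :: D) k] =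
  (if b then [::] else [:: 0]) ++ map S [seq k <- iota 0 (size D) | ~~ nth true D k].
Proof.
rewrite /=.
have -> : iota 1 (size D) = map S (iota 0 (size D)).
  by rewrite -(addn0 1) iotaDl; apply: eq_map.
rewrite filter_map.
by case: b.
Qed.

Lemma rheight_rr D k : rheight D k.+1 = rr D k.
Proof.
rewrite /rheight /=.
elim: D k => [|b D IH] k; first by case: k.
rewrite posF_cons; case: b => /=.
  by rewrite nth_mapS /ypos /= -IH.
case: k => [|k] //=.
by rewrite nth_mapS /ypos /= -IH.
Qed.

Lemma rr_cat p q k :
  rr (p ++ q) k = if k < cntF p then rr p k else count id p + rr q (k - cntF p).
Proof.
rewrite /cntF; elim: p k => [|b p IH] k /=; first by rewrite subn0.
case: b => /=.
  by rewrite IH !add0n; case: ifP.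
case: k => [|k] /=; first by [].
by rewrite IH add1n ltnS subSS.
Qed.

Lemma rr_le D k : rr D k <= count id D.
Proof.
elim: D k => [|b D IH] k //=; case: b => /=; first by rewrite add1n ltnS.
by case: k.
Qed.

Lemma rr_exists D k : k < cntF D -> exists m, [/\ m < size D, xpos D m = k,
  ypos D m = rr D k, xpos D m.+1 = k.+1 & ypos D m.+1 = rr D k].
Proof.
rewrite /cntF /xpos /ypos.
elim: D k => [|b D IH] k //=.
case: b => /=.
  move=> /IH [m [H1 H2 H3 H4 H5]]; exists m.+1; split => //=; by rewrite ?H2 ?H3 ?H4 ?H5.
case: k => [|k] /=.
  by move=> _; exists 0; split => //=; rewrite take0.
rewrite ltnS => /IH [m [H1 H2 H3 H4 H5]]; exists m.+1; split => //=; by rewrite ?add1n ?H2 ?H3 ?H4 ?H5.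
Qed.

Lemma dyck_of_rr D : (forall k, k < cntF D -> k < rr D k) -> forall m, xpos D m <= ypos D m.
Proof.
move=> H m.
have E : D = take m D ++ drop m D by rewrite cat_take_drop.
rewrite /xpos /ypos.
case Ex : (count (fun b => ~~ b) (take m D)) => [|x] //.
have Hx : x < cntF (take m D) by rewrite /cntF Ex.
have Hx2 : x < cntF D.
  by rewrite E /cntF count_cat; apply: leq_trans Hx _; apply: leq_addr.
have := H _ Hx2.
rewrite {1}E rr_cat Hx => Hlt.
have := rr_le (take m D) x; lia.
Qed.

Lemma dyck_cntF n D : dyck n D -> cntF D = n.
Proof.
case=> Hs Hc _; have := count_predC id D; rewrite Hs Hc /cntF.
have -> : count (predC id) D = count (fun b => ~~ b) D by [].
lia.
Qed.

Lemma dyck_rr n D : dyck n D -> forall k, k < n -> k < rr D k.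
Proof.
move=> Hd k Hk; rewrite -(dyck_cntF Hd) in Hk.
have [m [_ _ _ H4 H5]] := rr_exists Hk.
case: Hd => _ _ /(_ m.+1); rewrite H4 H5; done.
Qed.

Import Order.TTheory GRing.Theory Num.Theory.

Lemma dc_count (P : pred nat) n :
  (forall j j', 1 <= j' -> j' <= j -> j <= n -> P j -> P j') ->
  forall j, 1 <= j -> j <= n -> P j = (j <= count P (iota 1 n)).
Proof.
move=> Hdc j j1 jn.
have E : iota 1 n = iota 1 j ++ iota (1 + j) (n - j) by rewrite -iotaD subnKC.
rewrite E count_cat.
case Pj: (P j).
  have -> : count P (iota 1 j) = j.
    apply/eqP; rewrite -{2}(size_iota 1 j) -all_count; apply/allP => x.
    rewrite mem_iota => /andP[x1 xj]; apply: (Hdc j) => //; lia.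
  by rewrite leq_addr.
have -> : count P (iota (1 + j) (n - j)) = 0.
  apply/eqP; rewrite -leqn0 leqNgt -has_count; apply/hasPn => x.
  rewrite mem_iota => /andP[x1 xj]; apply/negP => Px.
  have := Hdc x j j1 ltac:(lia) ltac:(lia) Px; by rewrite Pj.
have E2 : iota 1 j = iota 1 (j - 1) ++ iota (1 + (j - 1)) 1 by rewrite -iotaD subnK.
rewrite E2 count_cat /= subnKC // Pj addn0 addn0.
have := count_size P (iota 1 (j - 1)); rewrite size_iota; lia.
Qed.


Lemma mono (R : realType) (a : nat -> R) (N : nat) (Hlr : left_to_right a N) i j : 1 <= i -> i <= j -> j <= N -> (a i <= a j)%R.
Proof.
move=> i1 ij jN.
have H : forall d, i + d <= N -> (a i <= a (i + d)%N)%R.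
  elim=> [|d IH] H; first by rewrite addn0.
  apply: le_trans (IH ltac:(lia)) _; rewrite addnS; apply: Hlr; lia.
have := H (j - i) ltac:(lia); by rewrite subnKC.
Qed.

Lemma prec_refl (R : realType) (a : nat -> R) i : ~~ prec a i i.
Proof. by rewrite /prec -leNgt lerDl ler01. Qed.

Lemma nprec_dc (R : realType) (a : nat -> R) (N : nat) (Hlr : left_to_right a N) i j j' : 1 <= j' -> j' <= j -> j <= N -> ~~ prec a i j -> ~~ prec a i j'.
Proof.
rewrite /prec -!leNgt => j1 jj jN H; apply: le_trans H; exact: (mono Hlr).
Qed.

Lemma prec_dc (R : realType) (a : nat -> R) (N : nat) (Hlr : left_to_right a N) k j j' : 1 <= j' -> j' <= j -> j <= N -> prec a j k -> prec a j' k.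
Proof.
rewrite /prec => j1 jj jN H; apply: le_lt_trans H; rewrite lerD2r; exact: (mono Hlr).
Qed.

Lemma prec_back (R : realType) (a : nat -> R) (N : nat) (Hlr : left_to_right a N) i j : 1 <= j -> j <= i -> i <= N -> ~~ prec a i j.
Proof.
rewrite /prec -leNgt => j1 ji iN; apply: le_trans (mono Hlr j1 ji iN) _.
by rewrite lerDl ler01.
Qed.

Lemma nprec_up (R : realType) (a : nat -> R) (N : nat) (Hlr : left_to_right a N) i j k : 1 <= j -> j <= k -> k <= N -> ~~ prec a i k -> ~~ prec a i j.
Proof. by move=> *; apply: (@nprec_dc R a N Hlr i k j). Qed.

Lemma nprec_shift (R : realType) (a : nat -> R) (N : nat) (Hlr : left_to_right a N) i j : 1 <= i -> i < N -> ~~ prec a i j -> ~~ prec a i.+1 j.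
Proof.
rewrite /prec -!leNgt => i1 iN H; apply: le_trans H _; rewrite lerD2r.
apply: Hlr => //.
Qed.



Fixpoint bld (h : nat -> nat) k : seq bool :=
  match k with
  | 0 => [::]
  | k'.+1 => bld h k' ++ (nseq (h k'.+1 - h k') true ++ [:: false])
  end.

Lemma rr_block d k : rr (nseq d true ++ [:: false]) k = d.
Proof. elim: d => [|d IH] /=; [by case: k | by rewrite IH]. Qed.

Lemma rr_nseqF m k : rr (nseq m false) k = 0.
Proof. by elim: m k => [|m IH] [|k] //=. Qed.

Lemma bld_props h k : (forall i, i < k -> h i <= h i.+1) -> h 0 = 0 ->
  [/\ cntF (bld h k) = k, count id (bld h k) = h k, size (bld h k) = k + h k &
      forall i, i < k -> rr (bld h k) i = h i.+1].
Proof.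
move=> Hm H0; elim: k Hm => [|k IH] Hm /=; first by rewrite H0.
have [IH1 IH2 IH3 IH4] := IH (fun i Hi => Hm i (ltnW Hi)).
have Hk := Hm k (ltnSn k).
split.
- by rewrite /cntF count_cat count_cat -/(cntF _) IH1 count_nseq /=; lia.
- by rewrite count_cat count_cat IH2 count_nseq /=; lia.
- by rewrite size_cat size_cat IH3 size_nseq /=; lia.
- move=> i Hi; rewrite rr_cat IH1; case: ifP => Hik; first by rewrite IH4.
  have -> : i = k by lia.
  by rewrite subnn rr_block IH2; lia.
Qed.

Theorem mainTheorem9 (R : realType) (n : nat) (a : nat -> R) :
  left_to_right a n.+1 ->
  (exists D, is_aU a n D) /\
  forall D : seq bool, is_aU a n D ->
    passes D (n - s_incomp a n) n /\
    is_aU a n.+1 (add_final_peak n D (n - s_incomp a n)).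
Proof.
move=> Hlr; split.
- pose H i := if i is 0 then 0 else count (fun j => ~~ prec a i j) (iota 1 n).
  have HH : forall i j, 1 <= i <= n -> 1 <= j <= n -> (~~ prec a i j) = (j <= H i).
    move=> [|i] j // /andP[i1 iN] /andP[j1 jN]; rewrite /H.
    apply: (dc_count (P := fun j => ~~ prec a i.+1 j)) => //.
    move=> k k' k1 kk kn; apply: (nprec_dc Hlr) => //; lia.
  have Hi : forall i, 1 <= i <= n -> i <= H i.
    by move=> i Hi; rewrite -HH // prec_refl.
  have HN : forall i, H i <= n.
    by move=> [|i] //=; have := count_size (fun j => ~~ prec a i.+1 j) (iota 1 n); rewrite size_iota.
  have Hmon : forall i, i < n -> H i <= H i.+1.
    move=> [|i] iN //=; apply: sub_count => j /=; apply: (nprec_shift Hlr) => //; lia.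
  have [B1 B2 B3 B4] := bld_props Hmon erefl.
  have Hn : H n = n.
    case: (posnP n) => n0; first by rewrite n0.
    apply/eqP; rewrite eqn_leq HN Hi //; lia.
  exists (bld H n); split.
    split; [by rewrite B3 Hn | by rewrite B2 Hn |].
    apply: dyck_of_rr => k; rewrite B1 => kn; rewrite B4 //; apply: Hi; lia.
  move=> [|i] j; first by [].
  rewrite /area rheight_rr.
  case Hij: (i.+1 < j); case Hjn: (j <= n) => //=.
  rewrite B4; last by lia.
  rewrite HH //; lia.
- move=> D [Hd Ha].
  set t := n - s_incomp a n.
  have HaR : forall i j, i.+1 < j -> j <= n -> (j <= rr D i) = ~~ prec a i.+1 j.
    move=> i j ij jn; have := Ha i.+1 j; rewrite /area rheight_rr ij jn /=; done.
  have HcF := dyck_cntF Hd.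
  case: (Hd) => Hs Hc Hpre.
  have Ht : forall i, 1 <= i <= n -> prec a i n.+1 = (i <= t).
    move=> i /andP[i1 iN].
    have Hcnt : count (fun i => prec a i n.+1) (iota 1 n) = t.
      rewrite /t /s_incomp.
      have -> : count (fun i => incomparable a i n.+1) (iota 1 n) =
                count (predC (fun i => prec a i n.+1)) (iota 1 n).
        apply: eq_in_count => x; rewrite mem_iota => /andP[x1 xn].
        rewrite /incomparable /= (@prec_back _ _ _ Hlr n.+1 x) ?andbT //; lia.
      have := count_predC (fun i => prec a i n.+1) (iota 1 n); rewrite size_iota; lia.
    rewrite -Hcnt; apply: (dc_count (P := fun i => prec a i n.+1)) => //.
    move=> k k' k1 kk kn; apply: (prec_dc Hlr) => //; lia.
  have tn : t <= n by rewrite /t; lia.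
  have Hpass : passes D t n.
    case: (ltnP t n) => tn'.
      have [m [m1 m2 m3 _ _]] := rr_exists (k := t) (D := D) ltac:(by rewrite HcF).
      exists m; split; [lia | split => //].
      rewrite m3; apply/eqP; rewrite eqn_leq; have := rr_le D t; rewrite Hc => -> /=.
      case: (ltnP t.+1 n) => tn2.
        rewrite HaR //; apply/negP => Hp.
        have := Ht t.+1 ltac:(lia); rewrite ltnn.
        have -> // : prec a t.+1 n.+1.
        move: Hp; rewrite /prec => Hp; apply: lt_le_trans Hp _; apply: (mono Hlr); lia.
      have := dyck_rr Hd tn'; lia.
    exists (size D); split => //; rewrite /xpos /ypos take_size -/(cntF D) HcF Hc.
    split => //; lia.
  split => //.
  case: Hpass => m [m1 [m2 m3]].
  have Hm : m = t + n.
    have := count_predC id (take m D); rewrite size_takel //.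
    move: m2 m3; rewrite /xpos /ypos => m2 m3.
    have -> : count (predC id) (take m D) = count (fun b => ~~ b) (take m D) by [].
    rewrite m2 m3; lia.
  rewrite /add_final_peak -Hm.
  set p := take m D.
  have pF : cntF p = t by [].
  have pT : count id p = n by [].
  have rrE : forall k, rr (p ++ true :: nseq (n.+1 - t) false) k =
                       if k < t then rr D k else n.+1.
    move=> k; rewrite rr_cat pF; case: ifP => kt.
      have := rr_cat p (drop m D) k; rewrite cat_take_drop pF kt; done.
    by rewrite pT /= rr_nseqF addn1.
  split.
    split.
    + rewrite size_cat /= size_nseq /p size_takel //; lia.
    + by rewrite count_cat pT /= count_nseq /=; lia.
    + apply: dyck_of_rr => k; rewrite /cntF count_cat -/(cntF p) pF /= count_nseq /= => kn.
      rewrite rrE; case: ifP => kt //.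
        apply: (dyck_rr Hd); lia.
      lia.
  move=> [|i] j; first by [].
  rewrite /area rheight_rr rrE.
  case Hij: (i.+1 < j); case Hjn: (j <= n.+1) => //=.
  case: ifP => it.
    case: (ltnP j n.+1) => jn.
      by rewrite HaR //; lia.
    have -> : j = n.+1 by lia.
    rewrite Ht; last by lia.
    have := rr_le D i; rewrite Hc; case: leqP => //; lia.
  rewrite Hjn; symmetry.
  apply: (nprec_up Hlr (k := n.+1)); try lia.
  rewrite Ht; last by lia.
  lia.
Qed.
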